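(* Let $d\ge 2$ and let $G$ be a germ. Then every vector $p\in G$ has at most $\frac{d(d-1)}{2}$ entries equal to zero.
   Context: Fix an integer $d\ge 2$. $\langle\cdot,\cdot\rangle$ denotes the standard inner product on $\mathbb{R}^{d^2}$. The probability simplex is $\Delta=\{p\in\mathbb{R}^{d^2}: p(i)\ge 0\ \forall i,\ \sum_i p(i)=1\}$. A subset $A\subseteq\Delta$ is a germ if $\frac{1}{d(d+1)}\le\langle p,s\rangle\le\frac{2}{d(d+1)}$ for all $p,s\in A$ (including $p=s$). *)

(* Defs.v *)
From HB Require Import structures.
From mathcomp Require Import all_boot all_order all_algebra.
Set Implicit Arguments. Unset Strict Implicit. Unset Printing Implicit Defensive.
Import Order.TTheory GRing.Theory Num.Theory.
Local Open Scope ring_scope.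

Definition vec (R : realFieldType) (d : nat) := {ffun 'I_(d ^ 2) -> R}.

Definition inner (R : realFieldType) (d : nat) (p s : vec R d) : R :=
  \sum_(i < d ^ 2) p i * s i.

Definition in_simplex (R : realFieldType) (d : nat) (p : vec R d) : Prop :=
  (forall i, 0 <= p i) /\ \sum_(i < d ^ 2) p i = 1.

Definition germ (R : realFieldType) (d : nat) (A : vec R d -> Prop) : Prop :=
  (forall p, A p -> in_simplex p) /\
  (forall p s, A p -> A s ->
     1 / (d * (d + 1))%:R <= inner p s /\ inner p s <= 2 / (d * (d + 1))%:R).

Definition nzeros (R : realFieldType) (d : nat) (p : vec R d) : nat :=
  #|[pred i : 'I_(d ^ 2) | p i == 0]|.

(* Main.v *)
Require Import Defs.
From HB Require Import structures.
From mathcomp Require Import all_boot all_order all_algebra.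
From mathcomp Require Import zify ring lra.
Import Order.TTheory GRing.Theory Num.Theory.
Local Open Scope ring_scope.

Theorem mainTheorem2 (R : realFieldType) (d : nat) (hd : (2 <= d)%N)
  (G : vec R d -> Prop) (hG : germ G) (p : vec R d) (hp : G p) :
  (nzeros p <= (d * (d - 1)) %/ 2)%N.
Proof.
case: hG => hS hI.
have [hpos hsum] := hS p hp.
have [_ hQ] := hI p p hp hp.
set k := #|[pred i : 'I_(d ^ 2) | p i != 0]|.
have hcard : (nzeros p + k = d ^ 2)%N.
  rewrite /nzeros /k.
  have hc := cardC [pred i : 'I_(d ^ 2) | p i == 0]; rewrite card_ord in hc.
  apply: etrans hc; congr (_ + _)%N; apply: eq_card => i; by rewrite !inE.
set Q := inner p p.
have e1 : \sum_(i | p i != 0) p i = 1.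
  by rewrite big_rmcond // => i /negPn /eqP.
have e2 : \sum_(i | p i != 0) p i * p i = Q.
  by rewrite big_rmcond // => i /negPn /eqP ->; rewrite mulr0.
have e3 : \sum_(i | p i != 0) (1 : R) = k%:R.
  by rewrite sumr_const.
set kR := (k%:R : R).
have hge : 0 <= \sum_(i | p i != 0) (kR * p i - 1) ^+ 2.
  by apply: sumr_ge0 => i _; apply: sqr_ge0.
have eexp : \sum_(i | p i != 0) (kR * p i - 1) ^+ 2 =
   kR * kR * Q - kR.
  transitivity (\sum_(i | p i != 0) (kR * kR * (p i * p i) - (kR *+ 2) * p i + 1)).
    by apply: eq_bigr => i _; ring.
  rewrite big_split /= sumrB -!mulr_sumr e1 e2 e3 /kR; ring.
rewrite eexp in hge.
have kpos : 0 < kR.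
  rewrite /kR ltr0n lt0n; apply/negP => /eqP k0.
  have hP : forall i : 'I_(d ^ 2), (p i != 0) = false.
    move=> i; apply/negbTE/negP => hi.
    have hin : i \in [pred i : 'I_(d ^ 2) | p i != 0] by [].
    by move/card0_eq: k0 => /(_ i); rewrite hin.
  move: e1; rewrite big_pred0 // => e.
  by move: (@oner_neq0 R); rewrite -e eqxx.
have hkQ : 1 <= kR * Q.
  have : kR * 1 <= kR * (kR * Q) by rewrite mulrA; lra.
  by rewrite ler_pM2l.
have hd0 : 0 < (d * (d + 1))%:R :> R by rewrite ltr0n muln_gt0; apply/andP; split; lia.
have h2 : ((d * (d + 1))%:R : R) <= kR * 2.
  have : kR * Q * (d * (d + 1))%:R <= kR * (2 / (d * (d + 1))%:R) * (d * (d + 1))%:R.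
    rewrite ler_pM2r // ler_pM2l //.
  rewrite -[kR * (2 / _) * _]mulrA divfK; last by rewrite gt_eqF.
  move=> h; apply: le_trans h; rewrite -[X in X <= _]mul1r ler_pM2r //.
have h2n : (d * (d + 1) <= k * 2)%N.
  rewrite -(ler_nat R) [(k * 2)%:R]natrM; exact: h2.
apply: (@leq_trans ((2 * nzeros p) %/ 2)%N).
  by rewrite mulKn.
apply: leq_div2r.
have : (nzeros p = d ^ 2 - k)%N by lia.
move=> ->. rewrite expnS expn1. nia.
Qed.
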